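(* Let $f\in\Delta(\mathcal{G},\le)$ and $1\le\alpha\le\beta$. If $f_\alpha\in\Delta(\mathcal{A},\le)$, then $f_\beta\in\Delta(\mathcal{A},\le)$. Consequently, for each $f\in\Delta(\mathcal{G},\le)$ the set of admissible exponents is either empty or an interval of $[1,\infty)$ unbounded from above.
   Context: Graphs are finite simple undirected; $x\simeq x'$ means equal or adjacent. Strong product $G\boxtimes H$: vertex set $V(G)\times V(H)$, $(g,h)\simeq(g',h')$ iff $g\simeq g'$ and $h\simeq h'$. $\sqcup$ is disjoint union. $H\le G$ for graphs means there is a homomorphism from the complement of $H$ to the complement of $G$. $\Delta(\mathcal{G},\le)$ is the set of maps $f$ from (isomorphism classes of) graphs to $\mathbb{R}_{\ge0}$ with $f(\text{empty graph})=0$, $f(K_1)=1$, $f(G\sqcup H)=f(G)+f(H)$, $f(G\boxtimes H)=f(G)f(H)$, and $H\le G\Rightarrow f(H)\le f(G)$. A noncommutative graph is a subspace $S\subseteq B(\mathcal{H})$ ($\mathcal{H}$ finite-dimensional complex Hilbert space) with $I\in S$, $S^*=S$; isomorphism is unitary conjugation. A cohomomorphism from $T\subseteq B(\mathcal{K})$ to $S\subseteq B(\mathcal{H})$ is a finite family of linear maps $E_i:\mathcal{K}\to\mathcal{H}$ with $\sum_iE_i^*E_i=I$ and $E_i^*SE_j\subseteq T$ for all $i,j$; write $T\le S$ if one exists. Tensor product and direct sum are $\operatorname{span}\{A\otimes B\}$ and $\{A\oplus B\}$. For a graph $G$, $\widehat{G}=\operatorname{span}\{|x\rangle\langle x'|:x\simeq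 x'\}\subseteq B(\mathbb{C}^{V(G)})$; $\mathcal{C}_d=\mathbb{C}I\subseteq B(\mathbb{C}^d)$. $\mathcal{A}$ is the semiring (under $\oplus,\otimes$, up to isomorphism) generated by all $\widehat{G}$ and all $\mathcal{C}_d$; every element has the form $\bigoplus_{d=1}^r\widehat{G_d}\otimes\mathcal{C}_d$. For $f\in\Delta(\mathcal{G},\le)$ and $\alpha\ge1$, $f_\alpha:\mathcal{A}\to\mathbb{R}_{\ge0}$ is the semiring homomorphism $f_\alpha(\bigoplus_{d=1}^r\widehat{G_d}\otimes\mathcal{C}_d)=\sum_{d=1}^r f(G_d)d^\alpha$. $\Delta(\mathcal{A},\le)$ is the set of $\le$-monotone semiring homomorphisms $\mathcal{A}\to\mathbb{R}_{\ge0}$. An exponent $\alpha\ge1$ is admissible for $f$ if $f_\alpha\in\Delta(\mathcal{A},\le)$. *)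

(* Defs.v *)
From HB Require Import structures.
From mathcomp Require Import all_boot all_order all_algebra.
From mathcomp Require Import complex mxtens.
From mathcomp Require Import reals exp Rstruct.

Set Implicit Arguments.
Unset Strict Implicit.
Unset Printing Implicit Defensive.

Import Order.TTheory GRing.Theory Num.Theory.
Local Open Scope ring_scope.

Notation RR := Rdefinitions.R.
Notation CC := (RR[i]).

Record graph := Graph {
  gV : finType;
  gadj : rel gV;
  gadj_sym : symmetric gadj;
  gadj_irr : irreflexive gadj }.
Arguments gadj : clear implicits.

Definition simeq (G : graph) (x y : gV G) : bool := (x == y) || gadj G x y.

Definition emptyG : graph :=
  @Graph void (fun _ _ => false) (fun _ _ => erefl) (fun _ => erefl).

Definition K1 : graph :=
  @Graph unit (fun _ _ => false) (fun _ _ => erefl) (fun _ => erefl).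

Definition dunion_adj (G H : graph) (u v : (gV G + gV H)%type) : bool :=
  match u, v with
  | inl x, inl y => gadj G x y
  | inr x, inr y => gadj H x y
  | _, _ => false
  end.

Lemma dunion_adj_sym G H : symmetric (@dunion_adj G H).
Proof. by case=> x [] y //=; rewrite gadj_sym. Qed.

Lemma dunion_adj_irr G H : irreflexive (@dunion_adj G H).
Proof. by case=> x /=; rewrite gadj_irr. Qed.

Definition dunion (G H : graph) : graph :=
  @Graph (gV G + gV H)%type (@dunion_adj G H)
    (@dunion_adj_sym G H) (@dunion_adj_irr G H).

Definition sprod_adj (G H : graph) (u v : (gV G * gV H)%type) : bool :=
  (u != v) && simeq u.1 v.1 && simeq u.2 v.2.

Lemma simeq_sym (G : graph) (x y : gV G) : @simeq G x y = @simeq G y x.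
Proof. by rewrite /simeq eq_sym gadj_sym. Qed.

Lemma sprod_adj_sym G H : symmetric (@sprod_adj G H).
Proof. by move=> u v; rewrite /sprod_adj eq_sym (@simeq_sym G) [simeq u.2 _](@simeq_sym H). Qed.

Lemma sprod_adj_irr G H : irreflexive (@sprod_adj G H).
Proof. by move=> u; rewrite /sprod_adj eqxx. Qed.

Definition sprod (G H : graph) : graph :=
  @Graph (gV G * gV H)%type (@sprod_adj G H)
    (@sprod_adj_sym G H) (@sprod_adj_irr G H).

(** H ≤ G : there is a homomorphism from the complement of H to the
    complement of G.  In the complement, x and y are adjacent iff they are
    neither equal nor adjacent, i.e. iff ~~ simeq x y. *)
Definition graph_le (H G : graph) : Prop :=
  exists phi : gV H -> gV G,
    forall x y, ~~ simeq x y -> ~~ simeq (phi x) (phi y).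

(** Δ(G, ≤) : maps from graphs to R_{>=0} (monotonicity forces invariance
    under isomorphism, so these are maps on isomorphism classes). *)
Definition inDeltaG (f : graph -> RR) : Prop :=
  (forall G, 0 <= f G) /\
  f emptyG = 0 /\ f K1 = 1 /\
  (forall G H, f (dunion G H) = f G + f H) /\
  (forall G H, f (sprod G H) = f G * f H) /\
  (forall G H, graph_le H G -> f H <= f G).

(** A subspace S of B(C^n) = 'M[CC]_n, encoded (as in mxalgebra) as the row
    space of a matrix whose rows are mxvec-encodings of matrices. *)
Record ncgraph := NCGraph {
  ndim : nat;
  nsp : 'M[CC]_(ndim * ndim) }.

Definition adjmx (m n : nat) (A : 'M[CC]_(m, n)) : 'M[CC]_(n, m) :=
  (map_mx Num.conj A)^T.

Definition cohom (T S : ncgraph) : Prop :=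
  exists (N : nat) (E : 'I_N -> 'M[CC]_(ndim S, ndim T)),
    \sum_(i < N) adjmx (E i) *m E i = 1%:M /\
    forall (i j : 'I_N) (X : 'M[CC]_(ndim S)),
      (X \in nsp S)%MS -> (adjmx (E i) *m X *m E j \in nsp T)%MS.

(** Ĝ = span { |x><x'| : x ≃ x' } ⊆ B(C^{V(G)}) (vertices indexed through
    enum_val). *)
Definition hatG (G : graph) : ncgraph :=
  @NCGraph #|gV G|
    (\sum_(i < #|gV G|) \sum_(j < #|gV G| | simeq (enum_val i) (enum_val j))
        <<mxvec (delta_mx i j : 'M[CC]_#|gV G|)>>)%MS.

Definition Cd (d : nat) : ncgraph :=
  @NCGraph d (<<mxvec (1%:M : 'M[CC]_d)>>)%MS.

Definition ncdsum (S T : ncgraph) : ncgraph :=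
  @NCGraph (ndim S + ndim T)
    ((\sum_(k < ndim S * ndim S)
        <<mxvec (block_mx (vec_mx (row k (nsp S))) 0 0
                   (0 : 'M[CC]_(ndim T)))>>)
     + (\sum_(k < ndim T * ndim T)
        <<mxvec (block_mx (0 : 'M[CC]_(ndim S)) 0 0
                   (vec_mx (row k (nsp T))))>>))%MS.

Definition nctens (S T : ncgraph) : ncgraph :=
  @NCGraph (ndim S * ndim T)
    (\sum_(k < ndim S * ndim S) \sum_(l < ndim T * ndim T)
        <<mxvec (vec_mx (row k (nsp S)) *t vec_mx (row l (nsp T)))>>)%MS.

Definition nczero : ncgraph := @NCGraph 0 0.

(** Elements of the semiring A are represented by a list
    [:: G_1; ...; G_r] of graphs, standing for ⊕_{d=1}^r Ĝ_d ⊗ C_d. *)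
Fixpoint arep_from (d : nat) (s : seq graph) : ncgraph :=
  match s with
  | [::] => nczero
  | G :: s' => ncdsum (nctens (hatG G) (Cd d)) (arep_from d.+1 s')
  end.

Definition arep (s : seq graph) : ncgraph := arep_from 1 s.

Definition f_alpha (f : graph -> RR) (alpha : RR) (s : seq graph) : RR :=
  \sum_(d < size s) f (nth emptyG s d) * powR (d.+1)%:R alpha.

(** f_α ∈ Δ(A, ≤).  f_α is (by construction, given f ∈ Δ(G,≤)) a semiring
    homomorphism A -> R_{>=0}; membership in Δ(A,≤) is its
    ≤-monotonicity: T ≤ S (a cohomomorphism from T to S exists) implies
    f_α(T) <= f_α(S), for all elements S, T of A. *)
Definition f_alpha_in_DeltaA (f : graph -> RR) (alpha : RR) : Prop :=
  forall s t : seq graph, cohom (arep t) (arep s) ->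
    f_alpha f alpha t <= f_alpha f alpha s.

Definition admissible (f : graph -> RR) (alpha : RR) : Prop :=
  1 <= alpha /\ f_alpha_in_DeltaA f alpha.

(* Main.v *)
Require Import Defs.
From HB Require Import structures.
From mathcomp Require Import all_boot all_order all_algebra.
From mathcomp Require Import complex mxtens.
From mathcomp Require Import reals exp Rstruct.
From Stdlib Require Import Classical.
Import Order.TTheory GRing.Theory Num.Theory.
Local Open Scope ring_scope.

Set Implicit Arguments.
Unset Strict Implicit.
Unset Printing Implicit Defensive.


Lemma mul_lin1 m n (f : 'rV[CC]_m -> 'rV[CC]_n) :
  (forall a u v, f (a *: u + v) = a *: f u + f v) ->
  forall u, u *m lin1_mx f = f u.
Proof.
move=> hf.
have f0 : f 0 = 0.
  by have := hf (-1) 0 0; rewrite scaler0 addr0 scaleN1r addNr.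
have fD u v : f (u + v) = f u + f v by have := hf 1 u v; rewrite !scale1r.
have fZ a u : f (a *: u) = a *: f u by have := hf a u 0; rewrite !addr0 f0 addr0.
have fS : forall (J : seq 'I_m) (c : 'I_m -> CC),
    f (\sum_(j <- J) c j *: delta_mx 0 j) = \sum_(j <- J) c j *: f (delta_mx 0 j).
  by move=> J c; elim: J => [|j J IH]; rewrite ?big_nil ?f0 // !big_cons fD fZ IH.
move=> u; rewrite {2}[u]row_sum_delta fS.
apply/rowP=> i; rewrite !mxE summxE; apply: eq_bigr => j _; rewrite !mxE.
by [].
Qed.

Lemma subL m p n k (v : 'M[CC]_(k, m)) (A : 'M_(p, m)) (L : 'M_(m, n)) q (W : 'M_(q, n)) :
  (v <= A)%MS -> (forall i, (row i A *m L <= W)%MS) -> (v *m L <= W)%MS.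
Proof.
move=> /submxP[u ->] h; rewrite -mulmxA; apply: submx_trans (submxMl _ _) _.
by apply/row_subP=> i; rewrite row_mul.
Qed.

Lemma sumL (I : finType) (P : pred I) m n (B : I -> 'M[CC]_m) (L : 'M_(m, n)) q (W : 'M_(q, n)) :
  (forall i, P i -> (B i *m L <= W)%MS) -> ((\sum_(i | P i) B i)%MS *m L <= W)%MS.
Proof.
move=> h; rewrite (sumsmxMr_gen P B L); apply/sumsmx_subP => i Pi.
by rewrite genmxE; exact: h.
Qed.

Lemma genL m n k (g : 'M[CC]_(k, m)) (L : 'M_(m, n)) q (W : 'M_(q, n)) :
  (g *m L <= W)%MS -> (<<g>>%MS *m L <= W)%MS.
Proof. by rewrite (eqmxMr L (genmxE g)). Qed.

Lemma tensmxDZl m n p q a (A B : 'M[CC]_(m,n)) (C : 'M[CC]_(p,q)) :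
  (a *: A + B) *t C = a *: (A *t C) + B *t C.
Proof. by apply/matrixP=> i j; rewrite !mxE mulrDl mulrA. Qed.

Lemma tensmxDZr m n p q a (A : 'M[CC]_(m,n)) (B C : 'M[CC]_(p,q)) :
  A *t (a *: B + C) = a *: (A *t B) + A *t C.
Proof. by apply/matrixP=> i j; rewrite !mxE mulrDr mulrCA. Qed.

Lemma tens11 m n : (1%:M : 'M[CC]_m) *t (1%:M : 'M[CC]_n) = 1%:M.
Proof.
apply/matrixP=> i j; case: (mxtens_indexP i) => i0 i1; case: (mxtens_indexP j) => j0 j1.
rewrite tensmxE !mxE (inj_eq (can_inj (@mxtens_indexK _ _))) xpair_eqE.
by rewrite -natrM mulnb.
Qed.

Definition adjmx' := adjmx.

Lemma adjmx_mul m n p (A : 'M[CC]_(m, n)) (B : 'M[CC]_(n, p)) :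
  adjmx (A *m B) = adjmx B *m adjmx A.
Proof. by rewrite /adjmx map_mxM trmx_mul. Qed.

Lemma adjmx_block m1 m2 n1 n2 (a : 'M[CC]_(m1, n1)) (b : 'M[CC]_(m1, n2))
  (c : 'M[CC]_(m2, n1)) (d : 'M[CC]_(m2, n2)) :
  adjmx (block_mx a b c d) = block_mx (adjmx a) (adjmx c) (adjmx b) (adjmx d).
Proof. by rewrite /adjmx map_block_mx tr_block_mx. Qed.

Lemma adjmx0 m n : adjmx (0 : 'M[CC]_(m, n)) = 0.
Proof. by apply/matrixP=> i j; rewrite !mxE rmorph0. Qed.

Lemma adj_eq0 m n (M : 'M[CC]_(m, n)) : adjmx M *m M = 0 -> M = 0.
Proof.
move=> h; apply/matrixP => i j; have := congr1 (fun X : 'M[CC]_n => X j j) h.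
rewrite /adjmx !mxE => /psumr_eq0P H.
have H0 : forall k : 'I_m, true -> 0 <= (map_mx Num.conj M)^T j k * M k j.
  by move=> k _; rewrite !mxE mulrC -normCK; exact: exprn_ge0 (normr_ge0 _).
have := H H0 i isT; rewrite !mxE => /eqP.
by rewrite mulrC -normCK expf_eq0 /= normr_eq0 => /eqP ->.
Qed.


Section DSum.
Variables S T : ncgraph.
Local Notation p := (ndim S).
Local Notation q := (ndim T).

Lemma dsum_proj n (f : 'rV[CC]_((p + q) * (p + q)) -> 'rV[CC]_n) r (W : 'M[CC]_(r, n)) :
  (forall a u v, f (a *: u + v) = a *: f u + f v) ->
  (forall k, (f (mxvec (block_mx (vec_mx (row k (nsp S))) 0 0 (0 : 'M_q))) <= W)%MS) ->
  (forall k, (f (mxvec (block_mx (0 : 'M_p) 0 0 (vec_mx (row k (nsp T))))) <= W)%MS) ->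
  forall X : 'M[CC]_(p + q), (mxvec X <= nsp (ncdsum S T))%MS -> (f (mxvec X) <= W)%MS.
Proof.
move=> hf h1 h2 X hX.
rewrite -(mul_lin1 hf); apply: submx_trans (submxMr _ hX) _.
rewrite /ncdsum /= addsmxMr addsmx_sub; apply/andP; split;
  apply: sumL => k _; apply: genL; rewrite mul_lin1 //.
Qed.

Lemma dsum_dr (X : 'M[CC]_(p + q)) :
  (mxvec X <= nsp (ncdsum S T))%MS -> (mxvec (drsubmx X) <= nsp T)%MS.
Proof.
move=> hX.
have := @dsum_proj _ (fun v => mxvec (drsubmx (vec_mx v : 'M_(p+q)))) _ (nsp T) _ _ _ X hX.
rewrite mxvecK; apply.
- by move=> a u v; rewrite /drsubmx !linearP.
- by move=> k; rewrite mxvecK block_mxKdr linear0 sub0mx.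
- by move=> k; rewrite mxvecK block_mxKdr vec_mxK row_sub.
Qed.

Lemma dsum_ul (X : 'M[CC]_(p + q)) :
  (mxvec X <= nsp (ncdsum S T))%MS -> (mxvec (ulsubmx X) <= nsp S)%MS.
Proof.
move=> hX.
have := @dsum_proj _ (fun v => mxvec (ulsubmx (vec_mx v : 'M_(p+q)))) _ (nsp S) _ _ _ X hX.
rewrite mxvecK; apply.
- by move=> a u v; rewrite /ulsubmx !linearP.
- by move=> k; rewrite mxvecK block_mxKul vec_mxK row_sub.
- by move=> k; rewrite mxvecK block_mxKul linear0 sub0mx.
Qed.

Lemma dsum_ur (X : 'M[CC]_(p + q)) :
  (mxvec X <= nsp (ncdsum S T))%MS -> ursubmx X = 0.
Proof.
move=> hX.
have := @dsum_proj _ (fun v => mxvec (ursubmx (vec_mx v : 'M_(p+q)))) _ (0 : 'M_(p * q)) _ _ _ X hX.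
rewrite mxvecK submx0 mxvec_eq0 => H; apply/eqP; apply: H.
- by move=> a u v; rewrite /ursubmx !linearP.
- by move=> k; rewrite mxvecK block_mxKur linear0 sub0mx.
- by move=> k; rewrite mxvecK block_mxKur linear0 sub0mx.
Qed.

Lemma dsum_dl (X : 'M[CC]_(p + q)) :
  (mxvec X <= nsp (ncdsum S T))%MS -> dlsubmx X = 0.
Proof.
move=> hX.
have := @dsum_proj _ (fun v => mxvec (dlsubmx (vec_mx v : 'M_(p+q)))) _ (0 : 'M_(q * p)) _ _ _ X hX.
rewrite mxvecK submx0 mxvec_eq0 => H; apply/eqP; apply: H.
- by move=> a u v; rewrite /dlsubmx !linearP.
- by move=> k; rewrite mxvecK block_mxKdl linear0 sub0mx.
- by move=> k; rewrite mxvecK block_mxKdl linear0 sub0mx.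
Qed.

Lemma dsum_inl (X1 : 'M[CC]_p) :
  (mxvec X1 <= nsp S)%MS -> (mxvec (block_mx X1 0 0 (0 : 'M_q)) <= nsp (ncdsum S T))%MS.
Proof.
move=> hX.
pose f := fun u : 'rV[CC]_(p * p) => mxvec (block_mx (vec_mx u) 0 0 (0 : 'M[CC]_q)).
have hf : forall a u v, f (a *: u + v) = a *: f u + f v.
  move=> a u v; rewrite /f -linearZ -raddfD /=; congr mxvec.
  by rewrite linearP scale_block_mx add_block_mx !scaler0 !addr0.
have -> : mxvec (block_mx X1 0 0 (0 : 'M_q)) = mxvec X1 *m lin1_mx f.
  by rewrite mul_lin1 // /f mxvecK.
apply: subL hX _ => k; rewrite mul_lin1 //.
rewrite /ncdsum /=; apply: submx_trans (addsmxSl _ _).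
by apply: (sumsmx_sup k) => //; rewrite genmxE.
Qed.

Lemma dsum_inr (X2 : 'M[CC]_q) :
  (mxvec X2 <= nsp T)%MS -> (mxvec (block_mx (0 : 'M_p) 0 0 X2) <= nsp (ncdsum S T))%MS.
Proof.
move=> hX.
pose f := fun u : 'rV[CC]_(q * q) => mxvec (block_mx (0 : 'M[CC]_p) 0 0 (vec_mx u)).
have hf : forall a u v, f (a *: u + v) = a *: f u + f v.
  move=> a u v; rewrite /f -linearZ -raddfD /=; congr mxvec.
  by rewrite linearP scale_block_mx add_block_mx !scaler0 !addr0.
have -> : mxvec (block_mx (0 : 'M_p) 0 0 X2) = mxvec X2 *m lin1_mx f.
  by rewrite mul_lin1 // /f mxvecK.
apply: subL hX _ => k; rewrite mul_lin1 //.
rewrite /ncdsum /=; apply: submx_trans (addsmxSr _ _).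
by apply: (sumsmx_sup k) => //; rewrite genmxE.
Qed.

End DSum.

Lemma rank_ul m1 m2 (X : 'M[CC]_(m1 + m2)) : (\rank (ulsubmx X) <= \rank X)%N.
Proof.
have -> : ulsubmx X = row_mx 1%:M 0 *m X *m col_mx 1%:M 0.
  rewrite -{2}[X]submxK mul_row_block !mul1mx !mul0mx !addr0 mul_row_col.
  by rewrite mulmx1 mulmx0 addr0.
by apply: leq_trans (mxrankM_maxl _ _) _; apply: mxrankM_maxr.
Qed.

Lemma rank_dr m1 m2 (X : 'M[CC]_(m1 + m2)) : (\rank (drsubmx X) <= \rank X)%N.
Proof.
have -> : drsubmx X = row_mx 0 1%:M *m X *m col_mx 0 1%:M.
  rewrite -{2}[X]submxK mul_row_block !mul1mx !mul0mx !add0r mul_row_col.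
  by rewrite mulmx1 mulmx0 add0r.
by apply: leq_trans (mxrankM_maxl _ _) _; apply: mxrankM_maxr.
Qed.


Lemma tens_in (S T : ncgraph) (A : 'M[CC]_(ndim S)) (B : 'M[CC]_(ndim T)) :
  (mxvec A <= nsp S)%MS -> (mxvec B <= nsp T)%MS ->
  (mxvec (A *t B) <= nsp (nctens S T))%MS.
Proof.
move=> hA hB.
pose fB := fun u : 'rV[CC]_(ndim S * ndim S) => mxvec (vec_mx u *t B).
have hfB : forall a u v, fB (a *: u + v) = a *: fB u + fB v.
  by move=> a u v; rewrite /fB [vec_mx _]linearP tensmxDZl linearP.
have -> : mxvec (A *t B) = mxvec A *m lin1_mx fB by rewrite mul_lin1 // /fB mxvecK.
apply: subL hA _ => k; rewrite mul_lin1 // /fB.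
pose g := fun w : 'rV[CC]_(ndim T * ndim T) =>
  mxvec (vec_mx (row k (nsp S)) *t vec_mx w).
have hg : forall a u v, g (a *: u + v) = a *: g u + g v.
  by move=> a u v; rewrite /g [vec_mx (_ + _)]linearP tensmxDZr linearP.
have -> : mxvec (vec_mx (row k (nsp S)) *t B) = mxvec B *m lin1_mx g.
  by rewrite mul_lin1 // /g mxvecK.
apply: subL hB _ => l; rewrite mul_lin1 // /g /nctens /=.
by apply: (sumsmx_sup k) => //; apply: (sumsmx_sup l) => //; rewrite genmxE.
Qed.

Lemma tensmxZr m n p q c (A : 'M[CC]_(m,n)) (B : 'M[CC]_(p,q)) :
  A *t (c *: B) = (c *: A) *t B.
Proof. by apply/matrixP=> i j; rewrite !mxE mulrCA mulrA. Qed.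

Lemma tens_Cd_form (S : ncgraph) k (X : 'M[CC]_(ndim S * k)) :
  (mxvec X <= nsp (nctens S (Cd k)))%MS ->
  exists A : 'M[CC]_(ndim S), X = A *t (1%:M : 'M_k).
Proof.
move=> hX.
pose f := fun u : 'rV[CC]_(ndim S * ndim S) => mxvec (vec_mx u *t (1%:M : 'M[CC]_k)).
have hf : forall a u v, f (a *: u + v) = a *: f u + f v.
  by move=> a u v; rewrite /f [vec_mx _]linearP tensmxDZl linearP.
have hL : (nsp (nctens S (Cd k)) <= lin1_mx f)%MS.
  rewrite /nctens /=; apply/sumsmx_subP => a _; apply/sumsmx_subP => b _.
  rewrite genmxE.
  have : (row b (<<mxvec (1%:M : 'M[CC]_k)>>%MS) <= mxvec (1%:M : 'M[CC]_k))%MS.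
    by apply: submx_trans (row_sub _ _) _; rewrite genmxE.
  case/sub_rVP => c ->; rewrite linearZ /= mxvecK tensmxZr.
  have -> : mxvec (c *: vec_mx (row a (nsp S)) *t (1%:M : 'M[CC]_k)) =
    f (mxvec (c *: vec_mx (row a (nsp S)))) by rewrite /f mxvecK.
  by rewrite -mul_lin1 // submxMl.
have /submxP [u hu] := submx_trans hX hL.
exists (vec_mx u); apply: (can_inj mxvecK); rewrite hu mul_lin1 //.
Qed.

Lemma tens1_rank m k (A : 'M[CC]_m) : A != 0 -> (k <= \rank (A *t (1%:M : 'M[CC]_k)))%N.
Proof.
move=> nzA.
case: (pickP (fun ij : 'I_m * 'I_m => A ij.1 ij.2 != 0)) => [[i j] /= hij | h]; last first.
  case/eqP: nzA; apply/matrixP => i j; have := h (i, j); rewrite /= mxE.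
  by move/negbFE/eqP.
pose P := (delta_mx 0 i : 'M[CC]_(1, m)) *t (1%:M : 'M[CC]_k).
pose Q := (delta_mx j 0 : 'M[CC]_(m, 1)) *t (1%:M : 'M[CC]_k).
have E1 : (delta_mx 0 i : 'M[CC]_(1, m)) *m A *m delta_mx j 0 = (A i j)%:M.
  by rewrite -rowE -colE; apply/matrixP => x y; rewrite !ord1 !mxE.
have E2 : ((A i j)%:M : 'M[CC]_1) *t (1%:M : 'M[CC]_k) = A i j *: 1%:M.
  apply/matrixP=> x y; case: (mxtens_indexP x) => x0 x1; case: (mxtens_indexP y) => y0 y1.
  rewrite tensmxE !mxE !ord1 (inj_eq (can_inj (@mxtens_indexK _ _))) xpair_eqE eqxx /=.
  by rewrite mulr1n.
have E : P *m (A *t (1%:M : 'M[CC]_k)) *m Q = A i j *: 1%:M.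
  by rewrite /P /Q !tensmx_mul !mulmx1 E1 E2.
have : \rank (P *m (A *t (1%:M : 'M[CC]_k)) *m Q) = k.
  by rewrite E mxrank_scale_nz // mxrank1 mul1n.
move=> hk; apply: leq_trans (eq_leq (esym hk)) _.
apply: leq_trans (mxrankM_maxl _ _) _; exact: mxrankM_maxr.
Qed.

Lemma arep_rank t k (X : 'M[CC]_(ndim (arep_from k t))) :
  (mxvec X <= nsp (arep_from k t))%MS -> (\rank X < k)%N -> X = 0.
Proof.
elim: t k X => [|G t IH] k X.
  by move=> _ _; apply/matrixP => -[].
change 'M[CC]_(ndim (nctens (hatG G) (Cd k)) + ndim (arep_from k.+1 t)) in X.
move=> hX hr.
have hur := dsum_ur hX; have hdl := dsum_dl hX.
have hdr : drsubmx X = 0.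
  apply: IH; first exact: dsum_dr hX.
  by apply: leq_ltn_trans (rank_dr X) (ltnW _); apply: leq_ltn_trans hr _.
have hul : ulsubmx X = 0.
  have [A hA] := tens_Cd_form (dsum_ul hX).
  case: (eqVneq A 0) => [A0|nzA]; first by rewrite hA A0 tens0mx.
  have := tens1_rank k nzA; rewrite -hA => hk.
  have := leq_trans hk (rank_ul X); rewrite leqNgt => /negP; case.
  exact: hr.
by rewrite -[X]submxK hul hur hdl hdr block_mx0.
Qed.


Lemma adjmxK m n (A : 'M[CC]_(m, n)) : adjmx (adjmx A) = A.
Proof. by apply/matrixP=> i j; rewrite /adjmx !mxE conjCK. Qed.

Lemma tens_suml (I : Type) (r : seq I) (P : pred I) m n p q (A : I -> 'M[CC]_(m, n)) (B : 'M[CC]_(p, q)) :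
  (\sum_(i <- r | P i) A i) *t B = \sum_(i <- r | P i) (A i *t B).
Proof.
apply/matrixP=> x z; rewrite mxE !summxE mulr_suml; apply: eq_bigr => i _.
by rewrite mxE.
Qed.

Lemma adj_C n d (y : 'I_n) :
  adjmx ((delta_mx y 0 : 'M[CC]_(n, 1)) *t (1%:M : 'M[CC]_d)) =
  (delta_mx 0 y : 'M[CC]_(1, n)) *t (1%:M : 'M[CC]_d).
Proof.
apply/matrixP=> r c; rewrite /adjmx !mxE rmorphM !rmorph_nat.
by rewrite andbC; congr (_ * _); rewrite eq_sym.
Qed.

Lemma hatG_diag (H : graph) (y : 'I_(ndim (hatG H))) :
  (mxvec (delta_mx y y : 'M[CC]_(ndim (hatG H))) <= nsp (hatG H))%MS.
Proof.
rewrite /hatG /=; apply: (sumsmx_sup y) => //; apply: (sumsmx_sup y).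
  by rewrite /simeq eqxx.
by rewrite genmxE.
Qed.

Lemma Cd_one d : (mxvec (1%:M : 'M[CC]_d) <= nsp (Cd d))%MS.
Proof. by rewrite /Cd /= genmxE. Qed.

Lemma core d G H t s :
  cohom (arep_from d (G :: t)) (arep_from d (H :: s)) ->
  cohom (arep_from d.+1 t) (arep_from d.+1 s).
Proof.
case=> N [E [hsum hmem]].
set T1 := nctens (hatG G) (Cd d); set T2 := arep_from d.+1 t.
set S1 := nctens (hatG H) (Cd d); set S2 := arep_from d.+1 s.
pose E' : 'I_N -> 'M[CC]_(ndim S1 + ndim S2, ndim T1 + ndim T2) := E.
have hsum' : \sum_(i < N) adjmx (E' i) *m E' i = 1%:M := hsum.
have hmem' : forall i j (X : 'M[CC]_(ndim S1 + ndim S2)),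
  (mxvec X <= nsp (ncdsum S1 S2))%MS ->
  (mxvec (adjmx (E' i) *m X *m E' j) <= nsp (ncdsum T1 T2))%MS := hmem.
clearbody E'; clear hsum hmem.
pose b i := ursubmx (E' i); pose e i := drsubmx (E' i).
pose nH := #|gV H|.
pose C (y : 'I_nH) := (delta_mx y 0 : 'M[CC]_(nH, 1)) *t (1%:M : 'M[CC]_d).
pose D (y : 'I_nH) := (delta_mx 0 y : 'M[CC]_(1, nH)) *t (1%:M : 'M[CC]_d).
have hb : forall i, b i = 0.
  move=> i.
  have hDb : forall y, D y *m b i = 0.
    move=> y.
    pose Z := C y *m D y.
    have hZ : Z = delta_mx y y *t 1%:M.
      by rewrite /Z /C /D tensmx_mul mul_delta_mx mulmx1.
    have hZS : (mxvec (block_mx Z 0 0 (0 : 'M[CC]_(ndim S2))) <= nsp (ncdsum S1 S2))%MS.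
      apply: dsum_inl; rewrite hZ; apply: tens_in; [exact: hatG_diag | exact: Cd_one].
    have := dsum_dr (hmem' i i _ hZS).
    have -> : drsubmx (adjmx (E' i) *m block_mx Z 0 0 (0 : 'M[CC]_(ndim S2)) *m E' i) =
              adjmx (b i) *m Z *m b i.
      rewrite -[E' i]submxK adjmx_block !mulmx_block block_mxKdr.
      by rewrite !mulmx0 !addr0 mul0mx addr0.
    move=> hW.
    have hW0 : adjmx (b i) *m Z *m b i = 0.
      apply: (@arep_rank t d.+1); first exact: hW.
      rewrite /Z !mulmxA -mulmxA.
      apply: leq_ltn_trans (mxrankM_maxl _ _) _.
      apply: leq_ltn_trans (mxrankM_maxr _ _) _.
      by apply: leq_ltn_trans (rank_leq_col _) _; rewrite mul1n.
    have hD : adjmx (D y) = C y by rewrite /D /C -adj_C adjmxK.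
    by apply: adj_eq0; rewrite adjmx_mul hD -hW0 /Z !mulmxA.
  have hsumZ : \sum_(y < nH) C y *m D y = 1%:M.
    rewrite -tens11 mx1_sum_delta tens_suml; apply: eq_bigr => y _.
    by rewrite /C /D tensmx_mul mul_delta_mx mulmx1.
  rewrite -[b i]mul1mx -hsumZ mulmx_suml big1 // => y _.
  by rewrite -mulmxA hDb mulmx0.
exists N, e; split.
  have := congr1 drsubmx hsum'.
  rewrite [1%:M](scalar_mx_block (ndim T1) (ndim T2)) block_mxKdr => <-.
  rewrite /drsubmx !linear_sum /=; apply: eq_bigr => i _.
  rewrite -/(drsubmx _) -[E' i]submxK adjmx_block mulmx_block block_mxKdr.
  by rewrite -/(b i) hb adjmx0 mul0mx add0r.
move=> i j X hX.
have := dsum_dr (hmem' i j _ (dsum_inr S1 hX)).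
rewrite -[E' i]submxK -[E' j]submxK adjmx_block !mulmx_block block_mxKdr.
by rewrite !mulmx0 !addr0 !add0r mul0mx add0r.
Qed.


Lemma mx_dim0 m n (h : m = 0%N) (A B : 'M[CC]_(m, n)) : A = B.
Proof. apply/matrixP => -[i hi]; exfalso; move: hi; rewrite h. done. Qed.

Lemma cohom_dim0 T S : ndim T = 0%N -> cohom T S.
Proof.
move=> h; exists 1%N, (fun _ => 0); split; first exact: mx_dim0.
by move=> i j X _; rewrite mulmx0 linear0 sub0mx.
Qed.

Lemma cohom_to_zero T : cohom T nczero -> ndim T = 0%N.
Proof.
case=> N [E [hsum _]].
case: (posnP (ndim T)) => // hpos.
pose i := Ordinal hpos.
have hz : \sum_(k < N) adjmx (E k) *m E k = 0.
  by apply: big1 => k _; rewrite (_ : E k = 0) ?mulmx0 //; apply/matrixP => -[].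
have := congr1 (fun M : 'M[CC]_(ndim T) => M i i) hsum.
by rewrite /= hz !mxE eqxx /= => /eqP; rewrite eq_sym oner_eq0.
Qed.

Fixpoint zr (m : nat) (t : seq graph) : seq graph :=
  match m with
  | 0 => t
  | m'.+1 => match t with [::] => [::] | _ :: t' => emptyG :: zr m' t' end
  end.

Lemma card_empty : #|gV emptyG| = 0%N.
Proof. exact: card_void. Qed.

Lemma ndim_zr0 m d t : ndim (arep_from d t) = 0%N -> ndim (arep_from d (zr m t)) = 0%N.
Proof.
elim: t m d => [|G t IH] [|m] d //.
change ((#|gV G| * d + ndim (arep_from d.+1 t))%N = 0%N ->
        (#|gV emptyG| * d + ndim (arep_from d.+1 (zr m t)))%N = 0%N).
by move/eqP; rewrite addn_eq0 => /andP[_ /eqP h]; rewrite card_empty IH.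
Qed.

Lemma sum_block0 (I : Type) (r : seq I) (P : pred I) m1 m2 n1 n2 (F : I -> 'M[CC]_(m2, n2)) :
  \sum_(i <- r | P i) block_mx (0 : 'M_(m1, n1)) 0 0 (F i) =
  block_mx 0 0 0 (\sum_(i <- r | P i) F i).
Proof.
elim/big_rec2: _ => [|i x y _ ->]; first by rewrite block_mx0.
by rewrite add_block_mx !addr0.
Qed.

Lemma readd Z T S : ndim Z = 0%N -> cohom T S -> cohom (ncdsum Z T) (ncdsum Z S).
Proof.
move=> hZ [N [E [hsum hmem]]].
exists N, (fun i => block_mx (0 : 'M[CC]_(ndim Z, ndim Z)) 0 0 (E i)); split.
  rewrite /=.
  under eq_bigr do rewrite adjmx_block !adjmx0 mulmx_block !mulmx0 !mul0mx !addr0 !add0r.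
  rewrite sum_block0 hsum (scalar_mx_block (ndim Z) (ndim T)).
  by congr block_mx; apply: mx_dim0.
move=> i j X hX.
have -> : adjmx (block_mx (0 : 'M[CC]_(ndim Z, ndim Z)) 0 0 (E i)) *m X *m
          block_mx (0 : 'M[CC]_(ndim Z, ndim Z)) 0 0 (E j) =
          block_mx 0 0 0 (adjmx (E i) *m drsubmx X *m E j).
  rewrite -[X]submxK adjmx_block !adjmx0 !mulmx_block block_mxKdr.
  rewrite !mulmx0 !mul0mx !addr0 !add0r; congr block_mx.
  by apply/matrixP=> a c; rewrite !mxE big1 // => k _; rewrite mxE mul0r.
by apply: dsum_inr; apply: hmem; apply: dsum_dr.
Qed.

Lemma cohom_z m : forall d t s, cohom (arep_from d t) (arep_from d s) ->
  cohom (arep_from d (zr m t)) (arep_from d (zr m s)).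
Proof.
elim: m => [|m IH] d t s h; first by [].
case: t h => [|G t] h; first exact: cohom_dim0.
case: s h => [|H s] h.
  apply: cohom_dim0; apply: ndim_zr0; exact: cohom_to_zero h.
have h1 := IH _ _ _ (core h).
apply: (@readd (nctens (hatG emptyG) (Cd d))) => //.
by rewrite /= card_empty.
Qed.


Lemma size_zr m t : size (zr m t) = size t.
Proof. by elim: t m => [|G t IH] [|m] //=; rewrite IH. Qed.

Lemma nth_zr m t i :
  nth emptyG (zr m t) i = if (i < m)%N then emptyG else nth emptyG t i.
Proof.
case: m => [|m]; first by [].
elim: t m i => [|G t IH] m i /=; first by rewrite !nth_nil; case: ifP.
case: i => [|i] //=; case: m => [|m] /=; first by [].
by rewrite IH.
Qed.

Lemma f_alpha_zr (f : graph -> RR) a m t : f emptyG = 0 ->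
  f_alpha f a (zr m t) =
  \sum_(i < size t) (if (m <= i)%N then f (nth emptyG t i) * powR (i.+1)%:R a else 0).
Proof.
move=> fe; rewrite /f_alpha size_zr; apply: eq_bigr => i _.
by rewrite nth_zr; case: (ltnP i m) => _; rewrite ?fe ?mul0r.
Qed.

Definition Cw (g : RR) (j : nat) : RR := if j is 0 then 0 else powR j%:R g.
Definition dw (g : RR) (m : nat) : RR := Cw g m.+1 - Cw g m.

Lemma dw_ge0 g m : 0 <= g -> 0 <= dw g m.
Proof.
move=> hg; rewrite /dw subr_ge0; case: m => [|m] /=; first exact: powR_ge0.
by apply: ge0_ler_powR => //; rewrite ?nnegrE ?ler0n // ler_nat.
Qed.

Lemma tele g (i K : nat) : (i < K)%N ->
  \sum_(m < K) (if (m <= i)%N then dw g m else 0) = powR i.+1%:R g.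
Proof.
move=> hiK.
rewrite -(big_mkord xpredT (fun m => if (m <= i)%N then dw g m else 0)).
rewrite (@big_cat_nat _ _ _ i.+1 0 K) //=.
rewrite [X in _ + X]big_nat_cond [X in _ + X]big1 ?addr0; last first.
  by move=> m /andP[/andP[hm _] _]; rewrite leqNgt hm.
rewrite big_nat_cond (eq_bigr (fun m => dw g m)); last first.
  by move=> m /andP[/andP[_ hm] _]; rewrite -ltnS hm.
rewrite -big_nat_cond telescope_sumr //=.
by rewrite subr0.
Qed.

Lemma abel (f : graph -> RR) (a b : RR) t K : f emptyG = 0 -> (size t <= K)%N ->
  f_alpha f b t = \sum_(m < K) dw (b - a) m * f_alpha f a (zr m t).
Proof.
move=> fe hK.
under [RHS]eq_bigr do rewrite f_alpha_zr // mulr_sumr.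
rewrite exchange_big /f_alpha; apply: eq_bigr => i _.
rewrite (eq_bigr (fun m : 'I_K => (if (m <= i)%N then dw (b - a) m else 0) *
    (f (nth emptyG t i) * powR i.+1%:R a))); last first.
  by move=> m _; case: ifP => _; rewrite ?mulr0 ?mul0r.
rewrite -mulr_suml tele; last exact: leq_trans (ltn_ord i) hK.
rewrite mulrCA -powRD; first by rewrite subrK.
by rewrite pnatr_eq0 implybT.
Qed.

Lemma part1 (f : graph -> RR) : inDeltaG f ->
  forall alpha beta : RR, 1 <= alpha -> alpha <= beta ->
     f_alpha_in_DeltaA f alpha -> f_alpha_in_DeltaA f beta.
Proof.
case=> [fge0 [fe _]] a b h1 hab ha s t hc.
pose K := maxn (size t) (size s).
rewrite (@abel f a b t K) ?leq_maxl // (@abel f a b s K) ?leq_maxr //.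
apply: ler_sum => m _; apply: ler_wpM2l; first by apply: dw_ge0; rewrite subr_ge0.
by apply: ha; apply: cohom_z.
Qed.

Unset Implicit Arguments.

Theorem theorem3p4 (f : graph -> RR) :
  inDeltaG f ->
  (forall alpha beta : RR, 1 <= alpha -> alpha <= beta ->
     f_alpha_in_DeltaA f alpha -> f_alpha_in_DeltaA f beta) /\
  ((forall alpha : RR, ~ admissible f alpha) \/
   [/\ (exists a : RR, admissible f a),
       (forall a b c : RR, admissible f a -> admissible f c ->
          a <= b -> b <= c -> admissible f b) &
       (forall M : RR, exists a : RR, M <= a /\ admissible f a)]).
Proof.
move=> hf; have P1 := part1 hf; split => //.
case: (classic (exists a, admissible f a)) => [[a [ha1 ha]] | hn]; last first.
  by left => a ha; apply: hn; exists a.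
right; split.
- by exists a.
- move=> x y z [hx1 hx] _ hxy _; split; first exact: le_trans hx1 hxy.
  exact: P1 hx1 hxy hx.
- move=> M; exists (Num.max M a); split; first by rewrite le_max lexx.
  have hle : a <= Num.max M a by rewrite le_max lexx orbT.
  split; first exact: le_trans ha1 hle.
  exact: P1 ha1 hle ha.
Qed.
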